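(* If $\Gamma$ has a cyclic fractional polymorphism of arity $m>1$, then the lifted language $\Gamma'$ (defined below) also has a cyclic fractional polymorphism of arity $m$.
   Context: $\Gamma$ is a finite set of cost functions $f:D^n\to\mathbb Q\cup\{\infty\}$ over finite $D$; $\mathrm{dom} f=\{x: f(x)<\infty\}$, also viewed as the $\{0,\infty\}$-valued function that is $0$ on $\mathrm{dom} f$. Let $\mathcal I$ be a feasible instance of $\mathrm{VCSP}(\Gamma)$ with variables $V$, constraints $t\in T$ with $f_t\in\Gamma$ of arity $n_t$ on variables $v(t,1),\dots,v(t,n_t)$. $D_v$ is the set of values $\sigma(v)$ over feasible solutions $\sigma$ of $\mathcal I$; $D'_v=\{(v,a):a\in D_v\}$ and $D'=\bigcup_{v\in V}D'_v$. For $n$-ary $f$ over $D$ and $v_1,\dots,v_n\in V$, $f^{\langle v_1,\dots,v_n\rangle}$ on $(D')^n$ equals $f(\hat x)$ at $((v_1,\hat x_1),\dots,(v_n,\hat x_n))$ and $\infty$ elsewhere. $\Gamma'=\bigcup_{t\in T}\{f_t^{\langle v(t,1),\dots,v(t,n_t)\rangle},\mathrm{dom} f_t^{\langle v(t,1),\dots,v(t,n_t)\rangle}\}\cup\{u_{D'_v}:v\in V\}\cup\{=_{D'}\}$, where $u_{D'_v}$ is $0$ on $D'_v$ and $\infty$ elsewhere on $D'$, and $=_{D'}$ is the binary function that is $0$ on equal pairs and $\infty$ otherwise. An $m$-ary fractional polymorphism of a language over a domain $E$ is a probability distribution $\omega$ on operations $g:E^m\to E$ such that for each $f$ in the language and $x^1,\dots,x^m\in\mathrm{dom}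 f$, $\sum_g\omega(g)f(g(x^1,\dots,x^m))\le\frac1m\sum_i f(x^i)$ (componentwise application); it is cyclic if all operations in its support satisfy $g(x_1,\dots,x_m)=g(x_2,\dots,x_m,x_1)$. *)

(* Defs.v *)
From HB Require Import structures.
From mathcomp Require Import all_boot all_order all_algebra.
From Stdlib Require List.
Set Implicit Arguments. Unset Strict Implicit. Unset Printing Implicit Defensive.
Import Order.TTheory GRing.Theory Num.Theory.
Local Open Scope ring_scope.

(* A cost function over domain E: arity n and a map E^n -> Q u {oo},
   where None represents oo. *)
Record cfun (E : Type) := CFun { ar : nat; fn : ar.-tuple E -> option rat }.
Arguments CFun {E} ar fn.
Arguments fn {E} c _.
Arguments ar {E} c.

Definition language (E : Type) := seq (cfun E).

Definition op (E : finType) (m : nat) := {ffun m.-tuple E -> E}.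

Definition app_op (E : finType) (m n : nat) (g : op E m)
  (xs : m.-tuple (n.-tuple E)) : n.-tuple E :=
  [tuple g [tuple tnth (tnth xs i) j | i < m] | j < n].

(* value of a finite cost (only used where the cost is finite) *)
Definition fin_val (R : realFieldType) (c : option rat) : R := ratr (odflt 0 c).

(* omega is a probability distribution on m-ary operations, weights in R;
   fractional polymorphism inequality, with convention 0 * oo = 0
   (i.e. the left-hand side is finite iff every g in the support maps
   into dom f). *)
Definition frac_pol (R : realFieldType) (E : finType) (m : nat)
  (L : language E) (w : {ffun op E m -> R}) : Prop :=
  (forall g, 0 <= w g) /\ (\sum_g w g = 1) /\
  forall f, List.In f L ->
  forall xs : m.-tuple ((ar f).-tuple E),
    (forall i, fn f (tnth xs i) != None) ->
    (forall g, 0 < w g -> fn f (app_op g xs) != None) /\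
    \sum_g w g * fin_val R (fn f (app_op g xs))
      <= (m%:R)^-1 * \sum_(i < m) fin_val R (fn f (tnth xs i)).

Definition cyclic_op (E : finType) (m : nat) (g : op E m) : Prop :=
  forall x : m.-tuple E, g x = g [tuple of rot 1 x].

Definition cyclic_frac_pol (R : realFieldType) (E : finType) (m : nat)
  (L : language E) (w : {ffun op E m -> R}) : Prop :=
  frac_pol L w /\ forall g, 0 < w g -> cyclic_op g.

(* An instance: variables V, constraints indexed by T, constraint t has
   cost function ft t (in Gamma) applied to the scope sc t. *)

Definition feasibleb (D V T : finType) (ft : T -> cfun D)
  (sc : forall t, (ar (ft t)).-tuple V) (s : {ffun V -> D}) : bool :=
  [forall t, fn (ft t) (map_tuple s (sc t)) != None].

Definition feasible_inst (D V T : finType) (ft : T -> cfun D)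
  (sc : forall t, (ar (ft t)).-tuple V) : Prop :=
  exists s : {ffun V -> D}, feasibleb sc s.

(* (v,a) \in D' iff a \in D_v *)
Definition inDp (D V T : finType) (ft : T -> cfun D)
  (sc : forall t, (ar (ft t)).-tuple V) : pred (V * D) :=
  fun p => [exists s : {ffun V -> D}, feasibleb sc s && (s p.1 == p.2)].

Definition Dp (D V T : finType) (ft : T -> cfun D)
  (sc : forall t, (ar (ft t)).-tuple V) : finType :=
  {p : V * D | inDp sc p}.

Section Lift.
Variables (D V T : finType) (ft : T -> cfun D)
  (sc : forall t, (ar (ft t)).-tuple V).
Local Notation E := (Dp sc).

Definition lift_cf (f : cfun D) (vs : (ar f).-tuple V) : cfun E :=
  CFun (ar f) (fun y : (ar f).-tuple E =>
    if [forall j, (sval (tnth y j)).1 == tnth vs j]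
    then fn f (map_tuple (fun p : E => (sval p).2) y) else None).

Definition dom_cf (E' : Type) (f : cfun E') : cfun E' :=
  CFun (ar f) (fun x => if fn f x is Some _ then Some 0%R else None).

Definition u_cf (v : V) : cfun E :=
  CFun 1 (fun y => if (sval (tnth y ord0)).1 == v then Some 0%R else None).

Definition eq_cf : cfun E :=
  CFun 2 (fun y => if tnth y ord0 == tnth y (@Ordinal 2 1 isT)
                   then Some 0%R else None).

Definition lifted_language : language E :=
  [seq lift_cf (sc t) | t <- enum T] ++
  [seq dom_cf (lift_cf (sc t)) | t <- enum T] ++
  [seq u_cf v | v <- enum V] ++ [:: eq_cf].
End Lift.

(* Main.v *)
Require Import Defs.
From HB Require Import structures.
From mathcomp Require Import all_boot all_order all_algebra.
From Stdlib Require List.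
Import Order.TTheory GRing.Theory Num.Theory.
Local Open Scope ring_scope.
Set Implicit Arguments. Unset Strict Implicit. Unset Printing Implicit Defensive.

Lemma In_cat (A : Type) (x : A) (s1 s2 : seq A) :
  List.In x (s1 ++ s2) -> List.In x s1 \/ List.In x s2.
Proof.
elim: s1 => [|y s IH] /=; first by right.
case=> [->|H]; first by left; left.
by case: (IH H) => H'; [left; right|right].
Qed.

Lemma In_map (A B : Type) (f : A -> B) (x : B) (s : seq A) :
  List.In x (map f s) -> exists y, x = f y.
Proof.
elim: s => [|y s IH] //= [<-|H]; first by exists y.
exact: IH.
Qed.

Section Proof.
Variables (R : realFieldType) (D : finType) (Gamma : language D)
  (V T : finType) (ft : T -> cfun D) (Hft : forall t, List.In (ft t) Gamma)
  (sc : forall t, (ar (ft t)).-tuple V) (n : nat)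
  (w : {ffun op D n.+1 -> R}) (Hw : cyclic_frac_pol Gamma w).
Local Notation m := n.+1.
Local Notation E := (Dp sc).

Definition var (e : E) : V := (sval e).1.
Definition vl (e : E) : D := (sval e).2.

Definition fb (c : m.-tuple E) : E := odflt (tnth c ord0) [pick e | e \in c].

Definition condc (c : m.-tuple E) : bool :=
  all (fun e => all (fun e' => var e == var e') c) c.

Definition liftg (g : op D m) : op E m := [ffun c : m.-tuple E =>
  if condc c then
    odflt (fb c) (insub (var (tnth c ord0), g (map_tuple vl c)) : option E)
  else fb c].

Definition closed (g : op D m) := forall v (a : m.-tuple D),
  (forall i, inDp sc (v, tnth a i)) -> inDp sc (v, g a).

Lemma liftgE g c v : closed g -> (forall i, var (tnth c i) = v) ->
  sval (liftg g c) = (v, g (map_tuple vl c)).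
Proof.
move=> Hg Hc; rewrite ffunE.
have -> : condc c.
  apply/allP => e /tnthP [i ->]; apply/allP => e' /tnthP [j ->].
  by rewrite !Hc.
rewrite Hc.
case: insubP => [u Hu Hval|Hn] /=; first by rewrite -Hval.
exfalso; move/negP: Hn; apply; apply: Hg => i.
rewrite tnth_map.
rewrite -(Hc i) /var /vl -surjective_pairing.
exact: (valP (tnth c i)).
Qed.

Lemma liftg_cyc g : cyclic_op g -> cyclic_op (liftg g).
Proof.
move=> Hg c; set c' := [tuple of rot 1 c].
have memc : c' =i c by move=> e; rewrite /= mem_rot.
have Hc : condc c' = condc c.
  have Hp : perm_eq (rot 1 c) c by rewrite perm_rot.
  rewrite /condc (perm_all _ Hp).
  apply: eq_all => e; exact: (perm_all _ Hp).
have Hfb : fb c' = fb c.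
  rewrite /fb (@eq_pick _ _ (fun e => e \in c)); last by move=> e; rewrite /= memc.
  case: pickP => [e He|H] //; exfalso; move: (H (tnth c ord0)).
  by rewrite mem_tnth.
rewrite !ffunE Hc Hfb; case: ifP => Hcond //.
have -> : var (tnth c' ord0) = var (tnth c ord0).
  have H0 : tnth c' ord0 \in c by rewrite -memc mem_tnth.
  move/allP: Hcond => /(_ _ H0) /allP /(_ _ (mem_tnth ord0 c)) /eqP.
  done.
have -> : map_tuple vl c' = [tuple of rot 1 (map_tuple vl c)].
  by apply: val_inj; rewrite /= map_rot.
by rewrite -Hg.
Qed.

Lemma closed_supp g : 0 < w g -> closed g.
Proof.
move: Hw => [[_ [_ Hfp]] _] Hpos v a Ha.
have Hex i : exists s : {ffun V -> D}, feasibleb sc s && (s v == tnth a i).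
  by move: (Ha i); rewrite /inDp => /existsP.
pose S i := xchoose (Hex i).
have HS i : feasibleb sc (S i) && (S i v == tnth a i) := xchooseP (Hex i).
pose s := [ffun u => g [tuple S i u | i < m]].
rewrite /inDp; apply/existsP; exists s; apply/andP; split; last first.
  rewrite /= ffunE; apply/eqP; apply: congr1; apply: eq_from_tnth => i.
  by rewrite tnth_mktuple; case/andP: (HS i) => _ /eqP.
apply/forallP => t.
pose xs := [tuple map_tuple (S i) (sc t) | i < m].
have Hxs i : fn (ft t) (tnth xs i) != None.
  rewrite tnth_mktuple; case/andP: (HS i) => /forallP H _; exact: H.
case: (Hfp _ (Hft t) xs Hxs) => /(_ g Hpos) H _.
suff <- : app_op g xs = map_tuple s (sc t) by [].
apply: eq_from_tnth => j; rewrite /app_op tnth_mktuple tnth_map ffunE.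
apply: congr1; apply: eq_from_tnth => i; by rewrite !tnth_mktuple tnth_map.
Qed.

Definition w' : {ffun op E m -> R} := [ffun g' => \sum_(g | liftg g == g') w g].

Lemma reduce (F : op E m -> R) :
  \sum_g' w' g' * F g' = \sum_g w g * F (liftg g).
Proof.
rewrite (partition_big liftg predT) //=; apply: eq_bigr => g' _.
by rewrite ffunE mulr_suml; apply: eq_bigr => g /eqP ->.
Qed.

Lemma w_ge0 g : 0 <= w g.
Proof. by move: Hw => [[H _] _]. Qed.

Lemma supp g' : 0 < w' g' -> exists g, liftg g = g' /\ 0 < w g.
Proof.
rewrite ffunE => H.
case: (boolP [exists g, (liftg g == g') && (0 < w g)]).
  by move/existsP => [g /andP [/eqP H1 H2]]; exists g.
move/existsPn => Hn; exfalso; move: H; rewrite big1 ?ltxx // => g Hg.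
move: (Hn g); rewrite Hg /=; rewrite lt_def w_ge0 andbT negbK => /eqP //.
Qed.

Lemma zero_ok (f' : cfun E) (xs : m.-tuple ((ar f').-tuple E)) :
  (forall y, fin_val R (fn f' y) = 0) ->
  \sum_g' w' g' * fin_val R (fn f' (app_op g' xs))
    <= (m%:R)^-1 * \sum_(i < m) fin_val R (fn f' (tnth xs i)).
Proof.
move=> H; rewrite !big1 ?mulr0 // => i _; by rewrite H ?mulr0.
Qed.

Lemma lift_key (f : cfun D) (vs : (ar f).-tuple V)
  (xs : m.-tuple ((ar f).-tuple E)) g :
  (forall i j, var (tnth (tnth xs i) j) = tnth vs j) -> closed g ->
  fn (lift_cf sc vs) (app_op (liftg g) xs)
   = fn f (app_op g (map_tuple (map_tuple vl) xs)).
Proof.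
move=> Hx Hg.
have col j : sval (tnth (app_op (liftg g) xs) j) =
   (tnth vs j, tnth (app_op g (map_tuple (map_tuple vl) xs)) j).
  rewrite /app_op !tnth_mktuple (liftgE (v := tnth vs j)) //.
    congr pair; apply: congr1; apply: eq_from_tnth => i.
    by rewrite tnth_map !tnth_mktuple !tnth_map.
  by move=> i; rewrite tnth_mktuple Hx.
rewrite /=.
have -> : [forall j, (sval (tnth (app_op (liftg g) xs) j)).1 == tnth vs j].
  by apply/forallP => j; rewrite col.
congr (fn f _); apply: eq_from_tnth => j; by rewrite tnth_map col.
Qed.

Lemma lift_dom (f : cfun D) (vs : (ar f).-tuple V) (x : (ar f).-tuple E) :
  fn (lift_cf sc vs) x != None ->
  (forall j, var (tnth x j) = tnth vs j) /\
  fn (lift_cf sc vs) x = fn f (map_tuple vl x).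
Proof.
rewrite /=; case: ifP => // /forallP H _; split => // j.
exact: (eqP (H j)).
Qed.

Lemma lift_case (f : cfun D) (Hf : List.In f Gamma) (vs : (ar f).-tuple V)
  (xs : m.-tuple ((ar f).-tuple E)) :
  (forall i, fn (lift_cf sc vs) (tnth xs i) != None) ->
  (forall g', 0 < w' g' -> fn (lift_cf sc vs) (app_op g' xs) != None) /\
  \sum_g' w' g' * fin_val R (fn (lift_cf sc vs) (app_op g' xs))
    <= (m%:R)^-1 * \sum_(i < m) fin_val R (fn (lift_cf sc vs) (tnth xs i)).
Proof.
move=> Hx.
have Hv i j : var (tnth (tnth xs i) j) = tnth vs j.
  by case: (lift_dom (Hx i)) => H _; apply: H.
pose ys := map_tuple (map_tuple vl) xs.
have Hy i : fn f (tnth ys i) != None.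
  by rewrite tnth_map; case: (lift_dom (Hx i)) => _ <-; apply: Hx.
move: Hw => [[_ [_ Hfp]] _].
case: (Hfp f Hf ys Hy) => HA HB.
split.
  move=> g' /supp [g [<- Hg]]; rewrite lift_key //; last exact: closed_supp.
  exact: HA.
rewrite reduce.
have -> : \sum_g w g * fin_val R (fn (lift_cf sc vs) (app_op (liftg g) xs))
   = \sum_g w g * fin_val R (fn f (app_op g ys)).
  apply: eq_bigr => g _.
  have := w_ge0 g; rewrite le_eqVlt => /orP [/eqP <-|Hg]; first by rewrite !mul0r.
  by rewrite lift_key //; apply: closed_supp.
have -> : \sum_(i < m) fin_val R (fn (lift_cf sc vs) (tnth xs i))
   = \sum_(i < m) fin_val R (fn f (tnth ys i)).
  apply: eq_bigr => i _; rewrite tnth_map.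
  by case: (lift_dom (Hx i)) => _ ->.
exact: HB.
Qed.

Lemma fin_val_cases (c : option rat) :
  (c = Some 0%R \/ c = None) -> fin_val R c = 0.
Proof. by case=> ->; rewrite /fin_val /= rmorph0. Qed.

Lemma dom_zero (f : cfun E) y : fin_val R (fn (dom_cf f) y) = 0.
Proof. by apply: fin_val_cases => /=; case: (fn f y); [left|right]. Qed.

Lemma dom_nN (f : cfun E) y : (fn (dom_cf f) y != None) = (fn f y != None).
Proof. by rewrite /=; case: (fn f y). Qed.

Lemma lifted_ok : cyclic_frac_pol (lifted_language sc) w'.
Proof.
split; last first.
  move=> g' /supp [g [<- Hg]]; apply: liftg_cyc.
  by move: Hw => [_ H]; apply: H.
split; first by move=> g'; rewrite ffunE; apply: sumr_ge0 => g _; apply: w_ge0.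
split.
  have := reduce (fun _ => 1); under eq_bigr do rewrite mulr1.
  move=> ->; under eq_bigr do rewrite mulr1.
  by move: Hw => [[_ [H _]] _].
move=> f' Hin.
rewrite /lifted_language in Hin.
case: (In_cat Hin) => {}Hin.
  case: (In_map Hin) => t -> xs Hx; apply: lift_case => //; exact: Hft.
case: (In_cat Hin) => {}Hin.
  case: (In_map Hin) => t -> xs Hx.
  split; last first.
    by apply: zero_ok => y; apply: dom_zero.
  have Hx' i : fn (lift_cf sc (sc t)) (tnth xs i) != None.
    by rewrite -dom_nN.
  case: (lift_case (Hft t) Hx') => HA _ g' Hg'.
  by rewrite dom_nN; apply: HA.
case: (In_cat Hin) => {}Hin.
  case: (In_map Hin) => v -> xs Hx.
  split; last first.
    apply: zero_ok => y; apply: fin_val_cases => /=.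
    by case: ifP; [left|right].
  move=> g' /supp [g [<- Hg]].
  rewrite /= /app_op tnth_mktuple (liftgE (v := v)) ?eqxx //.
    exact: closed_supp.
  move=> i; rewrite tnth_mktuple; move: (Hx i); rewrite /=.
  by case: ifP => // /eqP.
case: Hin => [<-|//] xs Hx.
split; last first.
  apply: zero_ok => y; apply: fin_val_cases => /=.
  by case: ifP; [left|right].
move=> g' _; rewrite /= /app_op !tnth_mktuple.
suff -> : [tuple tnth (tnth xs i) ord0 | i < m] =
          [tuple tnth (tnth xs i) (@Ordinal 2 1 isT) | i < m] by rewrite eqxx.
apply: eq_from_tnth => i; rewrite !tnth_mktuple.
by move: (Hx i); rewrite /=; case: ifP => // /eqP.
Qed.

End Proof.

Theorem lemma3p4 (R : realFieldType) (D : finType) (Gamma : language D)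
  (V T : finType) (ft : T -> cfun D) (Hft : forall t, List.In (ft t) Gamma)
  (sc : forall t, (ar (ft t)).-tuple V)
  (Hfeas : feasible_inst sc) (m : nat) (Hm : (1 < m)%N) :
  (exists w : {ffun op D m -> R}, cyclic_frac_pol Gamma w) ->
  exists w' : {ffun op (Dp sc) m -> R}, cyclic_frac_pol (lifted_language sc) w'.
Proof.
case: m Hm => // n _ [w Hw].
eexists; exact: (@lifted_ok R D Gamma V T ft Hft sc n w Hw).
Qed.
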